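(* Let $n,m\ge1$, $a^{(1)},b^{(1)}\in\mathbb{R}^n$, $a^{(2)},b^{(2)}\in\mathbb{R}^m$, and for $z\in\mathbb{R}$ put $X(z)=a^{(1)}+b^{(1)}z$, $Y(z)=a^{(2)}+b^{(2)}z$. For $i\in[n],j\in[m]$ and $M\in\mathcal{M}_{i,j}$ let $L_{i,j}(M,z)=\sum_{k\le i,\,l\le j}M_{kl}\,(X_k(z)-Y_l(z))^2$, $\hat L_{i,j}(z)=\min_{M\in\mathcal{M}_{i,j}}L_{i,j}(M,z)$, and $$\hat{\mathcal{M}}_{i,j}=\{M\in\mathcal{M}_{i,j} : \exists z\in\mathbb{R}\ \text{with}\ \hat L_{i,j}(z)=L_{i,j}(M,z)\},$$ with the conventions $\hat{\mathcal{M}}_{0,0}=\{\text{the empty }0\times0\text{ matrix}\}$ and $\hat{\mathcal{M}}_{i,j}=\emptyset$ if exactly one of $i,j$ is $0$. Define $$\tilde{\mathcal{M}}_{i,j}=\Big\{\mathrm{vstack}\big(\hat M,(0,\dots,0,1)\big):\hat M\in\hat{\mathcal{M}}_{i-1,j}\Big\}\cup\Big\{\mathrm{hstack}\big(\hat M,(0,\dots,0,1)^\top\big):\hat M\in\hat{\mathcal{M}}_{i,j-1}\Big\}\cup\Big\{\begin{pmatrix}\hat M&0\\0&1\end{pmatrix}:\hat M\in\hat{\mathcal{M}}_{i-1,j-1}\Big\},$$ all resulting matrices being $i\times j$. Then for every $i\in[n],j\in[m]$, $$\hat{\mathcal{M}}_{i,j}=\Big\{M\in\tilde{\mathcal{M}}_{i,j}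 : \exists z\in\mathbb{R}\ \text{with}\ L_{i,j}(M,z)=\min_{M'\in\tilde{\mathcal{M}}_{i,j}}L_{i,j}(M',z)\Big\},$$ i.e. $\hat{\mathcal{M}}_{i,j}$ is the set of matrices in $\tilde{\mathcal{M}}_{i,j}$ that minimize $L_{i,j}(\cdot,z)$ over $\tilde{\mathcal{M}}_{i,j}$ for some $z\in\mathbb{R}$.
   Context: For $i,j\ge1$, $\mathcal{M}_{i,j}\subset\{0,1\}^{i\times j}$ is the set of binary alignment matrices: matrices whose set of entries equal to $1$ is exactly the set of cells of a warping path $(1,1)=(i_1,j_1),\dots,(i_K,j_K)=(i,j)$ with each step in $\{(1,0),(0,1),(1,1)\}$. $\mathrm{vstack}(A,r)$ appends the row $r$ (of length $j$) below an $(i-1)\times j$ matrix $A$; $\mathrm{hstack}(A,c)$ appends the column $c$ (of length $i$) to the right of an $i\times(j-1)$ matrix $A$; $\begin{pmatrix}\hat M&0\\0&1\end{pmatrix}$ denotes the $i\times j$ matrix obtained from the $(i-1)\times(j-1)$ matrix $\hat M$ by adding a zero last row and zero last column except for entry $(i,j)$ equal to $1$. *)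

(* Defs.v *)
From mathcomp Require Import all_boot all_order all_algebra.
Set Implicit Arguments. Unset Strict Implicit. Unset Printing Implicit Defensive.
Import Order.TTheory GRing.Theory Num.Theory.
Local Open Scope ring_scope.

(* Indices are 0-based: row k of an i x j matrix corresponds to the paper's row k+1. *)

Definition wstep (p q : nat * nat) : bool :=
  [|| (q.1 == p.1.+1) && (q.2 == p.2),
      (q.1 == p.1) && (q.2 == p.2.+1)
    | (q.1 == p.1.+1) && (q.2 == p.2.+1)].

Definition warping_path (i j : nat) (s : seq (nat * nat)) : bool :=
  match s with
  | [::] => false
  | x :: s' => [&& x == (0%N, 0%N), path wstep x s' & last x s' == (i.-1, j.-1)]
  end.

(* Binary alignment matrices M_{i,j}: the 1-entries are exactly the cells of
   some warping path. *)
Definition alignment (i j : nat) (M : 'M[bool]_(i, j)) : Prop :=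
  exists s, warping_path i j s /\
    forall (k : 'I_i) (l : 'I_j), M k l = ((k : nat, l : nat) \in s).

(* k-th coordinate (0-based) of a row vector, 0 outside the range. *)
Definition vcoord (R : ringType) (n : nat) (v : 'rV[R]_n) (k : nat) : R :=
  match insub k with Some o => v 0 o | None => 0 end.

Definition affvec (R : ringType) (n : nat) (a b : 'rV[R]_n) (z : R) : nat -> R :=
  fun k => vcoord a k + vcoord b k * z.

Definition Lij (R : ringType) (i j : nat) (x y : nat -> R) (M : 'M[bool]_(i, j)) : R :=
  \sum_(k < i) \sum_(l < j) (M k l)%:R * (x k - y l) ^+ 2.

Definition hatM (R : realFieldType) (X Y : R -> nat -> R) (i j : nat)
    (M : 'M[bool]_(i, j)) : Prop :=
  if (i == 0%N) && (j == 0%N) then True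
  else if (i == 0%N) || (j == 0%N) then False
  else alignment M /\
       exists z : R, forall M' : 'M[bool]_(i, j), alignment M' ->
         Lij (X z) (Y z) M <= Lij (X z) (Y z) M'.

Definition tildeM (R : realFieldType) (X Y : R -> nat -> R) (i j : nat) :
    'M[bool]_(i, j) -> Prop :=
  match i, j return 'M[bool]_(i, j) -> Prop with
  | i'.+1, j'.+1 => fun M =>
      (exists Mh : 'M[bool]_(i', j'.+1), hatM X Y Mh /\
         M = \matrix_(k < i'.+1, l < j'.+1)
               match unlift ord_max k with
               | Some k' => Mh k' l
               | None => l == ord_max
               end)
   \/ (exists Mh : 'M[bool]_(i'.+1, j'), hatM X Y Mh /\
         M = \matrix_(k < i'.+1, l < j'.+1)
               match unlift ord_max l with
               | Some l' => Mh k l'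
               | None => k == ord_max
               end)
   \/ (exists Mh : 'M[bool]_(i', j'), hatM X Y Mh /\
         M = \matrix_(k < i'.+1, l < j'.+1)
               match unlift ord_max k, unlift ord_max l with
               | Some k', Some l' => Mh k' l'
               | None, None => true
               | _, _ => false
               end)
  | _, _ => fun _ => False
  end.

(* Main.v *)
Require Import Defs.
From mathcomp Require Import all_boot all_order all_algebra.
From mathcomp Require Import zify.
From Stdlib Require Import Classical.
Import Order.TTheory GRing.Theory Num.Theory.
Local Open Scope ring_scope.

Section S.
Variable R : realFieldType.

Definition E1 i' j' (Mh : 'M[bool]_(i', j'.+1)) : 'M[bool]_(i'.+1, j'.+1) :=
  \matrix_(k < i'.+1, l < j'.+1)
               match unlift ord_max k with
               | Some k' => Mh k' l
               | None => l == ord_max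
               end.
Definition E2 i' j' (Mh : 'M[bool]_(i'.+1, j')) : 'M[bool]_(i'.+1, j'.+1) :=
  \matrix_(k < i'.+1, l < j'.+1)
               match unlift ord_max l with
               | Some l' => Mh k l'
               | None => k == ord_max
               end.
Definition E3 i' j' (Mh : 'M[bool]_(i', j')) : 'M[bool]_(i'.+1, j'.+1) :=
  \matrix_(k < i'.+1, l < j'.+1)
               match unlift ord_max k, unlift ord_max l with
               | Some k', Some l' => Mh k' l'
               | None, None => true
               | _, _ => false
               end.

Definition memmx a b (p : seq (nat * nat)) : 'M[bool]_(a, b) :=
  \matrix_(k, l) ((k : nat, l : nat) \in p).

Definition alg a b (N : 'M[bool]_(a, b)) : Prop :=
  if (a == 0%N) && (b == 0%N) then True
  else if (a == 0%N) || (b == 0%N) then False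
  else alignment N.

Arguments E1 {i' j'}.
Arguments E2 {i' j'}.
Arguments E3 {i' j'}.
Arguments alg {a b}.

Lemma alignmentE a b (M : 'M[bool]_(a, b)) :
  alignment M <-> exists p, warping_path a b p /\ M = memmx a b p.
Proof.
split; move=> [p [wp H]]; exists p; split => //.
  by apply/matrixP => k l; rewrite mxE H.
by move=> k l; rewrite H mxE.
Qed.

Lemma path_bound x t : path wstep x t -> forall y, y \in x :: t ->
  (y.1 <= (last x t).1)%N && (y.2 <= (last x t).2)%N.
Proof.
elim: t x => [|z t IH] x /=.
  by move=> _ y; rewrite inE => /eqP ->; rewrite !leqnn.
move=> /andP [hxz hp] y; rewrite inE => /orP [/eqP ->|hy]; last exact: IH.
have /andP [h1 h2] := IH z hp z (mem_head _ _).
move: hxz; rewrite /wstep => /or3P [] /andP [/eqP e1 /eqP e2];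
  apply/andP; split; first [apply: (leq_trans _ h1) | apply: (leq_trans _ h2)]; by rewrite ?e1 ?e2 ?leqnSn.
Qed.

Lemma wp_rcons a b p i' j' : warping_path a b p -> wstep (a.-1, b.-1) (i', j') ->
  warping_path i'.+1 j'.+1 (rcons p (i', j')).
Proof.
case: p => [|x t] //= /and3P [hx hp /eqP hl] hw.
by rewrite hx rcons_path hp hl hw last_rcons eqxx.
Qed.

Arguments wp_rcons {a b p i' j'}.

Lemma notin_bound a b p (k l : nat) : warping_path a b p ->
  (a.-1 < k)%N || (b.-1 < l)%N -> ((k, l) \in p) = false.
Proof.
case: p => [|x t] //= /and3P [_ hp /eqP hl] h.
apply/negbTE/negP => /(@path_bound x t hp) /=; rewrite hl /=.
move/andP => [h1 h2]; move: h; rewrite !ltnNge h1 h2.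
by [].
Qed.

Lemma widen_lift n (k : 'I_n) : widen_ord (leqnSn n) k = lift ord_max k.
Proof. by apply: val_inj => /=; rewrite /bump leqNgt ltn_ord. Qed.


Lemma E1_mem i' j' p : (0 < i')%N -> warping_path i' j'.+1 p ->
  E1 (memmx i' j'.+1 p) = memmx i'.+1 j'.+1 (rcons p (i', j')).
Proof.
move=> hi wp; apply/matrixP => k l; rewrite !mxE mem_rcons inE xpair_eqE.
case: unliftP => [k'|] ->.
  by rewrite mxE lift_max (ltn_eqF (ltn_ord k')).
rewrite eqxx /= (@notin_bound i' j'.+1 p) ?orbF //.
by rewrite ltn_predL hi.
Qed.

Lemma E2_mem i' j' p : (0 < j')%N -> warping_path i'.+1 j' p ->
  E2 (memmx i'.+1 j' p) = memmx i'.+1 j'.+1 (rcons p (i', j')).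
Proof.
move=> hj wp; apply/matrixP => k l; rewrite !mxE mem_rcons inE xpair_eqE.
case: unliftP => [l'|] ->.
  by rewrite mxE lift_max (ltn_eqF (ltn_ord l')) andbF.
rewrite eqxx andbT (@notin_bound i'.+1 j' p) ?orbF //.
by rewrite ltn_predL hj orbT.
Qed.

Lemma E3_mem i' j' p : (0 < i')%N -> (0 < j')%N -> warping_path i' j' p ->
  E3 (memmx i' j' p) = memmx i'.+1 j'.+1 (rcons p (i', j')).
Proof.
move=> hi hj wp; apply/matrixP => k l; rewrite !mxE mem_rcons inE xpair_eqE.
case: unliftP => [k'|] ->; case: unliftP => [l'|] ->.
- by rewrite mxE !lift_max (ltn_eqF (ltn_ord k')).
- rewrite lift_max (ltn_eqF (ltn_ord k')) /= (@notin_bound i' j' p) //.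
  by rewrite ltn_predL hj orbT.
- rewrite lift_max (ltn_eqF (ltn_ord l')) andbF /= (@notin_bound i' j' p) //.
  by rewrite ltn_predL hi.
- by rewrite !eqxx.
Qed.

Lemma E3_00 (Mh : 'M[bool]_(0, 0)) : E3 Mh = memmx 1 1 [:: (0%N, 0%N)].
Proof.
apply/matrixP => k l; rewrite !mxE !ord1 /=.
by case: unliftP => [[]|] //; case: unliftP => [[]|].
Qed.


Lemma LE1 (x y : nat -> R) i' j' (Mh : 'M[bool]_(i', j'.+1)) :
  Lij x y (E1 Mh) = Lij x y Mh + (x i' - y j') ^+ 2.
Proof.
rewrite /Lij big_ord_recr /=; congr (_ + _).
  apply: eq_bigr => k _; apply: eq_bigr => l _.
  by rewrite mxE widen_lift liftK ?lift_max.
rewrite big_ord_recr /= big1 ?add0r.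
  by rewrite mxE unlift_none eqxx mul1r.
move=> l _; rewrite mxE unlift_none widen_lift eq_sym (negbTE (neq_lift _ _)).
by rewrite mul0r.
Qed.

Lemma LE2 (x y : nat -> R) i' j' (Mh : 'M[bool]_(i'.+1, j')) :
  Lij x y (E2 Mh) = Lij x y Mh + (x i' - y j') ^+ 2.
Proof.
rewrite /Lij.
under eq_bigr => k _ do rewrite big_ord_recr /=.
rewrite big_split /=; congr (_ + _).
  apply: eq_bigr => k _; apply: eq_bigr => l _.
  by rewrite mxE widen_lift liftK ?lift_max.
rewrite big_ord_recr /= big1 ?add0r.
  by rewrite mxE unlift_none eqxx mul1r.
move=> k _; rewrite mxE unlift_none widen_lift eq_sym (negbTE (neq_lift _ _)).
by rewrite mul0r.
Qed.

Lemma LE3 (x y : nat -> R) i' j' (Mh : 'M[bool]_(i', j')) :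
  Lij x y (E3 Mh) = Lij x y Mh + (x i' - y j') ^+ 2.
Proof.
rewrite /Lij big_ord_recr /=.
under eq_bigr => k _ do rewrite big_ord_recr /=.
rewrite big_split /= -addrA; congr (_ + _).
  apply: eq_bigr => k _; apply: eq_bigr => l _.
  by rewrite mxE !widen_lift !liftK ?lift_max.
rewrite big1 ?add0r; last first.
  by move=> k _; rewrite mxE widen_lift liftK unlift_none mul0r.
rewrite big_ord_recr /= big1 ?add0r.
  by rewrite mxE !unlift_none mul1r.
by move=> l _; rewrite mxE unlift_none widen_lift liftK mul0r.
Qed.


Lemma alg_E1 i' j' (Mh : 'M[bool]_(i', j'.+1)) : alg Mh -> alignment (E1 Mh).
Proof.
case: i' Mh => [|i'] Mh; first by rewrite /alg /=; case.
rewrite /alg /= => /alignmentE [p [wp ->]].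
rewrite E1_mem //; apply/alignmentE; exists (rcons p (i'.+1, j')); split => //.
by apply: (wp_rcons wp); rewrite /wstep /= !eqxx.
Qed.

Lemma alg_E2 i' j' (Mh : 'M[bool]_(i'.+1, j')) : alg Mh -> alignment (E2 Mh).
Proof.
case: j' Mh => [|j'] Mh; first by rewrite /alg /=; case.
rewrite /alg /= => /alignmentE [p [wp ->]].
rewrite E2_mem //; apply/alignmentE; exists (rcons p (i', j'.+1)); split => //.
by apply: (wp_rcons wp); rewrite /wstep /= !eqxx orbT.
Qed.

Lemma alg_E3 i' j' (Mh : 'M[bool]_(i', j')) : alg Mh -> alignment (E3 Mh).
Proof.
case: i' Mh => [|i'] Mh; case: j' Mh => [|j'] Mh; rewrite /alg /=; try by case.
  move=> _; rewrite E3_00; apply/alignmentE; exists [:: (0%N, 0%N)]; split => //.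
move=> /alignmentE [p [wp ->]].
rewrite E3_mem //; apply/alignmentE; exists (rcons p (i'.+1, j'.+1)); split => //.
by apply: (wp_rcons wp); rewrite /wstep /= !eqxx !orbT.
Qed.

Arguments alg_E1 {i' j' Mh}.
Arguments alg_E2 {i' j' Mh}.
Arguments alg_E3 {i' j' Mh}.

Lemma decomp i' j' (M : 'M[bool]_(i'.+1, j'.+1)) : alignment M ->
  (exists Mh : 'M_(i', j'.+1), alg Mh /\ M = E1 Mh) \/
  (exists Mh : 'M_(i'.+1, j'), alg Mh /\ M = E2 Mh) \/
  (exists Mh : 'M_(i', j'), alg Mh /\ M = E3 Mh).
Proof.
move/alignmentE => [[|x s] [//= /and3P [/eqP hx hp hl] ->]].
subst x.
case/lastP: s hp hl => [|t q].
  move=> _ /eqP [hi hj]; subst i' j'.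
  right; right; exists (memmx 0 0 [::]); split; first by rewrite /alg.
  by rewrite E3_00.
rewrite rcons_path last_rcons => /andP [hp hw] /eqP hq; subst q.
case E: (last (0%N, 0%N) t) hw => [a b] hw.
have wpt : warping_path a.+1 b.+1 ((0%N, 0%N) :: t) by rewrite /= hp E !eqxx.
case/or3P: hw => /andP [/eqP /= e1 /eqP /= e2]; subst.
- left; exists (memmx a.+1 b.+1 ((0%N, 0%N) :: t)); split.
    by rewrite /alg /=; apply/alignmentE; exists ((0%N, 0%N) :: t).
  by rewrite E1_mem.
- right; left; exists (memmx a.+1 b.+1 ((0%N, 0%N) :: t)); split.
    by rewrite /alg /=; apply/alignmentE; exists ((0%N, 0%N) :: t).
  by rewrite E2_mem.
- right; right; exists (memmx a.+1 b.+1 ((0%N, 0%N) :: t)); split.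
    by rewrite /alg /=; apply/alignmentE; exists ((0%N, 0%N) :: t).
  by rewrite E3_mem.
Qed.

Arguments decomp {i' j' M}.

Lemma hatME (X Y : R -> nat -> R) a b (N : 'M[bool]_(a, b)) :
  hatM X Y N <-> alg N /\ exists z, forall N' : 'M[bool]_(a, b), alg N' ->
     Lij (X z) (Y z) N <= Lij (X z) (Y z) N'.
Proof.
rewrite /hatM /alg; case: a N => [|a] N; case: b N => [|b] N /=.
- split => // _; split => //; exists 0 => N' _; by rewrite /Lij !big_ord0.
- by split => // [[]].
- by split => // [[]].
- exact: iff_refl.
Qed.

Lemma exists_min (T : finType) (P : T -> Prop) (f : T -> R) x0 :
  P x0 -> exists y, P y /\ forall x, P x -> f y <= f x.
Proof.
move=> h0.
suff: forall s : seq T, (exists x, x \in s /\ P x) ->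
    exists y, P y /\ forall x, x \in s -> P x -> f y <= f x.
  move/(_ (enum T)) => [|y [Py H]]; first by exists x0; rewrite mem_enum.
  by exists y; split => // x; apply: H; rewrite mem_enum.
elim=> [|a s IH] [x [hx Px]]; first by [].
case: (classic (exists x, x \in s /\ P x)) => [ex|nex].
  have [y [Py H]] := IH ex.
  case: (classic (P a)) => Pa.
    have [hay|hay] := leP (f a) (f y).
      exists a; split => // z; rewrite inE => /orP [/eqP -> _ | zs Pz].
        exact: lexx.
      exact: le_trans hay (H z zs Pz).
    exists y; split => // z; rewrite inE => /orP [/eqP -> _ | zs Pz].
      exact: ltW.
    exact: H.
  exists y; split => // z; rewrite inE => /orP [/eqP -> // | zs Pz].
  exact: H.
move: hx; rewrite inE => /orP [/eqP hxa|xs]; last first.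
  by exfalso; apply: nex; exists x.
subst; exists a; split => // z; rewrite inE => /orP [/eqP -> _|zs Pz].
  exact: lexx.
by exfalso; apply: nex; exists z.
Qed.

Arguments exists_min {T P} f {x0}.
Arguments hatME {X Y a b N}.

Section Main.
Variables (X Y : R -> nat -> R).

Lemma tildeME i' j' (M : 'M[bool]_(i'.+1, j'.+1)) : tildeM X Y M <->
  (exists Mh, hatM X Y Mh /\ M = E1 Mh) \/ (exists Mh, hatM X Y Mh /\ M = E2 Mh)
  \/ (exists Mh, hatM X Y Mh /\ M = E3 Mh).
Proof. exact: iff_refl. Qed.

Lemma T_align i' j' (M : 'M[bool]_(i'.+1, j'.+1)) : tildeM X Y M -> alignment M.
Proof.
rewrite tildeME => [[[Mh [/hatME [h _] ->]] | [[Mh [/hatME [h _] ->]] | [Mh [/hatME [h _] ->]]]]].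
- exact: alg_E1.
- exact: alg_E2.
- exact: alg_E3.
Qed.

Arguments T_align {i' j' M}.

Lemma main_gen i' j' (M : 'M[bool]_(i'.+1, j'.+1)) :
  hatM X Y M <-> (tildeM X Y M /\ exists z : R, forall M' : 'M[bool]_(i'.+1, j'.+1),
     tildeM X Y M' -> Lij (X z) (Y z) M <= Lij (X z) (Y z) M').
Proof.
split.
- move=> /hatME [hM [z Hz]].
  split; last by exists z => M' /T_align hM'; exact: Hz.
  case: (decomp hM) => [[Mh [hMh eM]] | [[Mh [hMh eM]] | [Mh [hMh eM]]]];
    rewrite tildeME.
  + left; exists Mh; split => //; apply/hatME; split => //; exists z => N' hN'.
    by have := Hz (E1 N') (alg_E1 hN'); rewrite eM !LE1 lerD2r.
  + right; left; exists Mh; split => //; apply/hatME; split => //; exists z => N' hN'.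
    by have := Hz (E2 N') (alg_E2 hN'); rewrite eM !LE2 lerD2r.
  + right; right; exists Mh; split => //; apply/hatME; split => //; exists z => N' hN'.
    by have := Hz (E3 N') (alg_E3 hN'); rewrite eM !LE3 lerD2r.
- move=> [hT [z Hz]]; apply/hatME; split; first exact: T_align hT.
  exists z => M'' hM''.
  case: (decomp hM'') => [[N [hN ->]] | [[N [hN ->]] | [N [hN ->]]]].
  + have [Ns [hNs HNs]] := exists_min (fun N' => Lij (X z) (Y z) N') hN.
    have hT' : tildeM X Y (E1 Ns).
      by rewrite tildeME; left; exists Ns; split => //; apply/hatME; split => //; exists z.
    apply: le_trans (Hz _ hT') _; rewrite !LE1 lerD2r; exact: HNs.
  + have [Ns [hNs HNs]] := exists_min (fun N' => Lij (X z) (Y z) N') hN.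
    have hT' : tildeM X Y (E2 Ns).
      by rewrite tildeME; right; left; exists Ns; split => //; apply/hatME; split => //; exists z.
    apply: le_trans (Hz _ hT') _; rewrite !LE2 lerD2r; exact: HNs.
  + have [Ns [hNs HNs]] := exists_min (fun N' => Lij (X z) (Y z) N') hN.
    have hT' : tildeM X Y (E3 Ns).
      by rewrite tildeME; right; right; exists Ns; split => //; apply/hatME; split => //; exists z.
    apply: le_trans (Hz _ hT') _; rewrite !LE3 lerD2r; exact: HNs.
Qed.

End Main.
End S.

Theorem lemma2 (R : realFieldType) (n m : nat) (hn : (0 < n)%N) (hm : (0 < m)%N)
    (a1 b1 : 'rV[R]_n) (a2 b2 : 'rV[R]_m)
    (i j : nat) (hi0 : (0 < i)%N) (hin : (i <= n)%N) (hj0 : (0 < j)%N) (hjm : (j <= m)%N)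
    (M : 'M[bool]_(i, j)) :
  hatM (affvec a1 b1) (affvec a2 b2) M <->
  (tildeM (affvec a1 b1) (affvec a2 b2) M /\
   exists z : R, forall M' : 'M[bool]_(i, j),
     tildeM (affvec a1 b1) (affvec a2 b2) M' ->
     Lij (affvec a1 b1 z) (affvec a2 b2 z) M <= Lij (affvec a1 b1 z) (affvec a2 b2 z) M').
Proof.
case: i hi0 hin M => [|i'] // _ _ M; case: j hj0 hjm M => [|j'] // _ _ M.
exact: main_gen.
Qed.
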